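(* Let $\beta>0$ and let $A$ be a real random variable with $\Pr(0\le A<a_{\max})=1$ for some $a_{\max}>0$. Let $\eta\in(0,1]$ be the solution of $\beta=\dfrac{1-\eta}{1-\mathbb E\{1/(1+\eta A)\}}$. If $\beta\,\mathbb E\Big\{\dfrac{\eta A}{1+\eta A}\Big\}<\dfrac12$, then $$\Psi(A,\beta)\le \beta\log(1+a_{\max})+\log e\cdot\Big(\beta\,\frac{a_{\max}}{1+a_{\max}}\Big)^2.$$
   Context: Logarithms are base 2. For a nonnegative real random variable $A$ and $\beta>0$, $\Psi(A,\beta)=\beta\,\mathbb E\{\log(1+\eta A)\}-\log\eta+(\eta-1)\log e$, where $\eta\in(0,1]$ is the solution of $\beta=\dfrac{1-\eta}{1-\mathbb E\{1/(1+\eta A)\}}$ (equivalently $\eta=1-\beta\,\mathbb E\{\eta A/(1+\eta A)\}$). *)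

(* Defs.v *)
From Stdlib Require Import Reals Lra.
Open Scope R_scope.

Definition log2 (x : R) : R := ln x / ln 2.
Definition log2e : R := / ln 2.

Definition bounded_on (amax : R) (f : R -> R) : Prop :=
  exists M, forall x, 0 <= x < amax -> Rabs (f x) <= M.

(* The law of a real random variable A with Pr(0 <= A < amax) = 1, presented
   through its expectation operator  E f = E{ f(A) }  on functions that are
   bounded on [0, amax): it is linear, monotone w.r.t. the pointwise order on
   [0, amax) (so only the values on the support matter) and normalized. *)
Record RV_law (amax : R) := {
  Ex : (R -> R) -> R;
  Ex_lin : forall (f g : R -> R) (a b : R),
      bounded_on amax f -> bounded_on amax g ->
      Ex (fun x => a * f x + b * g x) = a * Ex f + b * Ex g;
  Ex_mono : forall f g : R -> R,
      bounded_on amax f -> bounded_on amax g ->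
      (forall x, 0 <= x < amax -> f x <= g x) -> Ex f <= Ex g;
  Ex_const : forall c : R, Ex (fun _ => c) = c
}.
Arguments Ex {amax} _ _.

(* eta is "the solution" in (0,1] of beta = (1-eta)/(1 - E{1/(1+eta A)}),
   in the equivalent form eta = 1 - beta E{eta A/(1+eta A)}. *)
Definition is_eta {amax : R} (P : RV_law amax) (beta eta : R) : Prop :=
  0 < eta <= 1 /\ eta = 1 - beta * Ex P (fun a => eta * a / (1 + eta * a)).

Definition Psi {amax : R} (P : RV_law amax) (beta eta : R) : R :=
  beta * Ex P (fun a => log2 (1 + eta * a)) - log2 eta + (eta - 1) * log2e.

(* Main.v *)
Require Import Defs.
From Stdlib Require Import Reals Lra.
Open Scope R_scope.

Lemma ln_le' a b : 0 < a -> a <= b -> ln a <= ln b.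
Proof.
  intros Ha Hab. destruct (Rle_lt_or_eq_dec _ _ Hab) as [H|H].
  - left; apply ln_increasing; auto.
  - subst; lra.
Qed.

Lemma key_ineq t : 0 <= t <= 1/2 -> - ln (1 - t) - t <= t * t.
Proof.
  intros [H0 H1]. destruct (Rle_lt_or_eq_dec _ _ H0) as [Hp|He].
  2:{ subst. replace (1-0) with 1 by lra. rewrite ln_1. lra. }
  set (f := fun x => x * x + x + ln (1 - x)).
  set (f' := fun x => 2 * x + 1 + (/ (1 - x)) * (-1)).
  destruct (MVT_cor2 f f' 0 t Hp) as [c [Hc Hc2]].
  { intros c Hc. unfold f, f'.
    apply derivable_pt_lim_plus.
    - replace (2 * c + 1) with ((1 * c + c * 1) + 1) by ring.
      apply derivable_pt_lim_plus.
      + apply derivable_pt_lim_mult; apply derivable_pt_lim_id.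
      + apply derivable_pt_lim_id.
    - apply (derivable_pt_lim_comp (fun x => 1 - x) ln).
      + replace (-1) with (0 - 1) by ring.
        apply derivable_pt_lim_minus; [apply derivable_pt_lim_const| apply derivable_pt_lim_id].
      + apply derivable_pt_lim_ln. lra. }
  unfold f, f' in Hc.
  replace (1 - 0) with 1 in Hc by lra. rewrite ln_1 in Hc.
  assert (Hd : 0 <= 2 * c + 1 + / (1 - c) * -1).
  { assert (0 < 1 - c) by lra.
    replace (2 * c + 1 + / (1 - c) * -1) with (c * (1 - 2 * c) / (1 - c)) by (field; lra).
    apply Rmult_le_pos; [apply Rmult_le_pos; lra | left; apply Rinv_0_lt_compat; lra]. }
  assert (0 <= (2 * c + 1 + / (1 - c) * -1) * (t - 0)) by (apply Rmult_le_pos; lra).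
  lra.
Qed.

Theorem mainTheorem11 (beta amax : R) (P : RV_law amax) (eta : R)
  (hbeta : 0 < beta) (hamax : 0 < amax)
  (heta : is_eta P beta eta)
  (hsmall : beta * Ex P (fun a => eta * a / (1 + eta * a)) < 1 / 2) :
  Psi P beta eta <=
    beta * log2 (1 + amax) + log2e * (beta * (amax / (1 + amax))) ^ 2.
Proof.
  destruct heta as [[He0 He1] Heq].
  assert (Hln2 : 0 < ln 2) by (rewrite <- ln_1; apply ln_increasing; lra).
  set (g := fun a => eta * a / (1 + eta * a)) in *.
  set (c := amax / (1 + amax)).
  assert (bconst : forall k, bounded_on amax (fun _ => k)).
  { intro k. exists (Rabs k). intros; lra. }
  assert (Hgb : bounded_on amax g).
  { exists 1. intros x Hx. unfold g. assert (0 <= eta * x) by (apply Rmult_le_pos; lra).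
    rewrite Rabs_right.
    - apply (Rmult_le_reg_r (1 + eta * x)); [lra|]. unfold Rdiv. rewrite Rmult_assoc, Rinv_l by lra. lra.
    - apply Rle_ge, Rmult_le_pos; [lra| left; apply Rinv_0_lt_compat; lra]. }
  assert (Hg0 : 0 <= Ex P g).
  { rewrite <- (Ex_const _ P 0). apply Ex_mono; auto.
    intros x Hx. unfold g. apply Rmult_le_pos; [apply Rmult_le_pos; lra| left; apply Rinv_0_lt_compat; nra]. }
  assert (Hgc : Ex P g <= c).
  { rewrite <- (Ex_const _ P c). apply Ex_mono; auto.
    intros x Hx. unfold g, c. assert (0 <= eta * x) by (apply Rmult_le_pos; lra).
    assert (eta * x <= amax) by nra.
    unfold Rdiv. apply (Rmult_le_reg_r ((1 + eta * x) * (1 + amax))). nra.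
    replace (eta * x * / (1 + eta * x) * ((1 + eta * x) * (1 + amax))) with (eta * x * (1 + amax)) by (field; lra).
    replace (amax * / (1 + amax) * ((1 + eta * x) * (1 + amax))) with (amax * (1 + eta * x)) by (field; lra).
    nra. }
  assert (HL : Ex P (fun a => log2 (1 + eta * a)) <= log2 (1 + amax)).
  { rewrite <- (Ex_const _ P (log2 (1 + amax))). apply Ex_mono; auto.
    - exists (log2 (1 + amax)). intros x Hx. assert (0 <= eta * x) by (apply Rmult_le_pos; lra).
      unfold log2. assert (0 <= ln (1 + eta * x)) by (rewrite <- ln_1; apply ln_le'; lra).
      assert (ln (1 + eta * x) <= ln (1 + amax)) by (apply ln_le'; nra).
      rewrite Rabs_right.
      + unfold Rdiv; apply Rmult_le_compat_r; [left; apply Rinv_0_lt_compat; lra| lra].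
      + apply Rle_ge; unfold Rdiv; apply Rmult_le_pos; [lra| left; apply Rinv_0_lt_compat; lra].
    - intros x Hx. assert (0 <= eta * x) by (apply Rmult_le_pos; lra).
      unfold log2, Rdiv. apply Rmult_le_compat_r; [left; apply Rinv_0_lt_compat; lra|].
      apply ln_le'; nra. }
  set (t := beta * Ex P g) in *.
  assert (Ht0 : 0 <= t) by (unfold t; apply Rmult_le_pos; lra).
  assert (Htc : t <= beta * c) by (unfold t; apply Rmult_le_compat_l; lra).
  assert (Hk := key_ineq t (conj Ht0 (Rlt_le _ _ hsmall))).
  assert (Hsq : t * t <= (beta * c) ^ 2) by nra.
  unfold Psi, log2e. fold g.
  replace (log2 eta) with (ln eta / ln 2) by reflexivity.
  assert (Het : eta = 1 - t) by (unfold t; exact Heq).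
  assert (beta * Ex P (fun a => log2 (1 + eta * a)) <= beta * log2 (1 + amax))
    by (apply Rmult_le_compat_l; lra).
  assert (Hx : (- ln (1 - t) - t) / ln 2 <= / ln 2 * (beta * c) ^ 2).
  { unfold Rdiv. rewrite Rmult_comm. apply Rmult_le_compat_l; [left; apply Rinv_0_lt_compat; lra| lra]. }
  assert (Hy : - (ln eta / ln 2) + (eta - 1) * / ln 2 <= / ln 2 * (beta * c) ^ 2).
  { rewrite Het. replace (- (ln (1 - t) / ln 2) + (1 - t - 1) * / ln 2) with ((- ln (1 - t) - t) / ln 2) by (field; lra). exact Hx. }
  lra.
Qed.
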